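(* Let $M \neq \{0\}$ be a semiideal of $\mathbb{N}_0$ of period $d$. Then the quotient $\mathbb{N}_0/M$ is isomorphic to $\mathbb{Z}/(d)$ (as $\mathbb{N}_0$-semimodules, i.e. commutative monoids).
   Context: $\mathbb{N}_0$ is the semiring of natural numbers including $0$. A semiideal of $\mathbb{N}_0$ is a nonempty subset closed under addition and multiplication by elements of $\mathbb{N}_0$. For a semiideal $M\neq 0$, a difference of $M$ is an element $e \in \mathbb{N}$ with $x+e=y$ for some $x,y\in M$, $x\neq 0$; the period of $M$ is the minimal difference. $\mathbb{N}_0/M$ denotes the set of equivalence classes of the congruence relation $n \sim_M n' \iff \exists a, b \in M: n + a = n' + b$, with addition $\bar n + \bar n' = \overline{n+n'}$. $\mathbb{Z}/(d)$ is regarded as a commutative monoid under addition. *)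

(* Defs.v *)
From mathcomp Require Import all_boot.
Set Implicit Arguments. Unset Strict Implicit. Unset Printing Implicit Defensive.

Definition semiideal (M : nat -> Prop) : Prop :=
  (exists x, M x) /\
  (forall x y, M x -> M y -> M (x + y)) /\
  (forall n x, M x -> M (n * x)).

Definition is_difference (M : nat -> Prop) (e : nat) : Prop :=
  0 < e /\ exists x y, M x /\ M y /\ x <> 0 /\ x + e = y.

Definition is_period (M : nat -> Prop) (d : nat) : Prop :=
  is_difference M d /\ forall e, is_difference M e -> d <= e.

Definition congM (M : nat -> Prop) (n n' : nat) : Prop :=
  exists a b, M a /\ M b /\ n + a = n' + b.

Definition zd_add (d : nat) (u v : 'I_d) : nat := (val u + val v) %% d.

(* N_0/M is isomorphic to Z/(d) as commutative monoids: by the universal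
   property of the quotient, this means there is a monoid homomorphism
   f : N_0 -> Z/(d) which is surjective and whose kernel congruence is
   exactly ~_M (so f induces an isomorphism N_0/M ~= Z/(d)). *)
Definition quotient_iso_Zd (M : nat -> Prop) (d : nat) : Prop :=
  exists f : nat -> 'I_d,
    val (f 0) = 0 /\
    (forall n m, val (f (n + m)) = zd_add (f n) (f m)) /\
    (forall u : 'I_d, exists n, f n = u) /\
    (forall n n', f n = f n' <-> congM M n n').

(* Main.v *)
Require Import Defs.
From mathcomp Require Import all_boot.
From mathcomp Require Import zify.

Lemma per_dvd (M : nat -> Prop) (d : nat) :
  semiideal M -> is_period M d -> forall m, M m -> d %| m.
Proof.
move=> [_ [Hadd Hmul]] [[dpos [x0 [y0 [Mx0 [My0 [x0n Hy]]]]]] Hmin] m Mm.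
apply/negPn/negP => Hnd.
have r0 : 0 < m %% d by rewrite lt0n; apply: contra Hnd => /eqP H; apply/eqP.
set k := (m %/ d).+1.
have MA : M (m + k * x0) by apply: Hadd => //; apply: Hmul.
have MB : M (k * y0) by apply: Hmul.
have := Hmin (d - m %% d).
have Hlt : m %% d < d by rewrite ltn_mod.
have Hdm := divn_eq m d.
have : d <= d - m %% d.
  apply: Hmin; split; first lia.
  exists (m + k * x0), (k * y0); split => //; split => //; split.
    rewrite /k; nia.
  rewrite /k -Hy. nia.
lia.
Qed.

Theorem theorem4p13 (M : nat -> Prop) (d : nat) :
  semiideal M ->
  (exists x, M x /\ x <> 0) ->
  is_period M d ->
  quotient_iso_Zd M d.
Proof.
move=> HS _ HP.
have Hdv := @per_dvd M d HS HP.
move: HS HP => [_ [Hadd Hmul]] [[dpos [x0 [y0 [Mx0 [My0 [x0n Hy]]]]]] Hmin].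
exists (fun n => Ordinal (ltn_pmod n dpos)).
split; first by rewrite /= mod0n.
split; first by move=> n m; rewrite /zd_add /= modnDm.
split; first by move=> u; exists (val u); apply: val_inj; rewrite /= modn_small.
move=> n n'; split.
- move=> /(congr1 val) /= E.
  case: (leqP n n') => H.
  + have Hd : d %| n' - n by rewrite -eqn_mod_dvd // E.
    case/dvdnP: Hd => t Ht.
    exists (t * y0), (t * x0); split; first exact: Hmul.
    split; first exact: Hmul.
    rewrite -Hy; nia.
  + have Hd : d %| n - n' by rewrite -eqn_mod_dvd ?(ltnW H) // E.
    case/dvdnP: Hd => t Ht.
    exists (t * x0), (t * y0); split; first exact: Hmul.
    split; first exact: Hmul.
    rewrite -Hy; nia.
- move=> [a [b [Ma [Mb E]]]]; apply: val_inj => /=.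
  have := Hdv a Ma; have := Hdv b Mb.
  rewrite /dvdn => /eqP Hb /eqP Ha.
  have : (n + a) %% d = (n' + b) %% d by rewrite E.
  by rewrite -modnDm Ha addn0 modn_mod -[in RHS]modnDm Hb addn0 modn_mod.
Qed.
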